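(* Fix $0<m<2M$. For $s_1,s_2\in\{+,-\}$ and $\xi_1,\xi_2\in\mathbb{R}^3$ define \[ \mu^{s_1,s_2}(\xi_1,\xi_2):=\langle\xi_1-\xi_2\rangle_m+s_1\langle\xi_1\rangle_M-s_2\langle\xi_2\rangle_M . \] There is a (sufficiently small) absolute constant $c>0$ such that the following hold, with implicit constants depending only on $m,M$ (and $c$). Case 1: If (a) $s_1=+,s_2=-$, or (b) $s_1=-,s_2=+$ and $\langle\xi_1-\xi_2\rangle_m\le c\min(\langle\xi_1\rangle_M,\langle\xi_2\rangle_M)$, then \[ |\mu^{s_1,s_2}(\xi_1,\xi_2)|\gtrsim \max(\langle\xi_1-\xi_2\rangle,\langle\xi_1\rangle,\langle\xi_2\rangle). \] Case 2: If (a) $s_1=s_2$, or (b) $s_1=-,s_2=+$ and $\langle\xi_1-\xi_2\rangle_m> c\min(\langle\xi_1\rangle_M,\langle\xi_2\rangle_M)$, then \[ |\mu^{s_1,s_2}(\xi_1,\xi_2)|\gtrsim \frac{\langle\xi_1\rangle\langle\xi_2\rangle}{\langle\xi_1-\xi_2\rangle}\,\angle(s_1\xi_1,s_2\xi_2)^2 . \] For every choice of signs $s_1,s_2$ one has both \[ |\mu^{s_1,s_2}(\xi_1,\xi_2)|\gtrsim \min(\langle\xi_1\rangle,\langle\xi_2\rangle)\,\angle(s_1\xi_1,s_2\xi_2)^2 \] and \[ |\mu^{s_1,s_2}(\xi_1,\xi_2)|\gtrsim \max(\langle\xi_1-\xi_2\rangle^{-1},\langle\xi_1\rangle^{-1},\langle\xi_2\rangle^{-1}).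 \]
   Context: For $a\ge0$, $\langle\xi\rangle_a:=(a^2+|\xi|^2)^{1/2}$ and $\langle\xi\rangle:=\langle\xi\rangle_1$. For nonzero vectors $x,y\in\mathbb{R}^3$, $\angle(x,y)\in[0,\pi]$ denotes the angle between $x$ and $y$. $A\gtrsim B$ means $A\ge C^{-1}B$ for a constant $C>0$ (here depending only on $m,M$). *)

(* Defs.v *)
From mathcomp Require Import all_boot all_order all_algebra.
From mathcomp Require Import all_classical all_reals all_analysis.
Set Implicit Arguments. Unset Strict Implicit. Unset Printing Implicit Defensive.
Import Order.TTheory GRing.Theory Num.Theory.
Local Open Scope ring_scope.

Definition dot3 {R : realType} (x y : 'rV[R]_3) : R :=
  \sum_(i < 3) x ord0 i * y ord0 i.

Definition norm3 {R : realType} (x : 'rV[R]_3) : R := Num.sqrt (dot3 x x).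

(* Japanese bracket <xi>_a := (a^2 + |xi|^2)^(1/2);  <xi> := <xi>_1 *)
Definition jb {R : realType} (a : R) (x : 'rV[R]_3) : R :=
  Num.sqrt (a ^+ 2 + dot3 x x).
Definition jb1 {R : realType} (x : 'rV[R]_3) : R := jb 1 x.

Definition angle3 {R : realType} (x y : 'rV[R]_3) : R :=
  acos (dot3 x y / (norm3 x * norm3 y)).

Definition sgnb {R : realType} (s : bool) : R := if s then 1 else -1.

Definition mu {R : realType} (m M : R) (s1 s2 : bool) (x1 x2 : 'rV[R]_3) : R :=
  jb m (x1 - x2) + sgnb s1 * jb M x1 - sgnb s2 * jb M x2.

(* Main.v *)
Require Import Defs.
From mathcomp Require Import all_boot all_order all_algebra.
From mathcomp Require Import all_classical all_reals all_analysis.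
From mathcomp Require Import ring lra.
Import Order.TTheory GRing.Theory Num.Theory numFieldNormedType.Exports.
Local Open Scope ring_scope.

Lemma cos_le_mono (R : realType) (x y : R) : 0 <= x -> x <= y -> y <= pi -> cos y <= cos x.
Proof.
move=> x0 xy ypi.
have xI : x \in `[0, pi] by rewrite in_itv /= x0 (le_trans xy ypi).
have yI : y \in `[0, pi] by rewrite in_itv /= (le_trans x0 xy) ypi.
by rewrite leNgt (ltr_cos yI xI) -leNgt.
Qed.

Lemma sin_lin (R : realType) : exists k : R, 0 < k /\
  forall y, 0 <= y -> y <= pi / 2 -> k * y <= sin y.
Proof.
have c1 : 0 < cos (1:R) := cos1_gt0 R.
have s1 : 0 < sin (1:R) by apply: sin2_gt0; rewrite ltr01 /= ltr1n.
have c1le : cos (1:R) <= 1 := cos_le1 1.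
have s1le : sin (1:R) <= 1 := sin_le1 1.
have pi2 : pi / 2 < (2:R) := pihalf_lt2 R.
exists (cos 1 * (sin 1 / 2)); split.
  by rewrite mulr_gt0 ?divr_gt0.
move=> y y0 ypi.
have [y1|y1] := lerP y 1.
- have hd : forall x, x \in `]0, y[ -> is_derive x 1 (@sin R) (cos x).
    by move=> x _; exact: is_derive_sin.
  have := @MVT_segment R sin cos 0 y y0 hd.
  case; first exact/continuous_subspaceT/continuous_sin.
  move=> z /itvP zI; rewrite sin0 !subr0 => ->.
  have hz : cos 1 <= cos z.
    apply: cos_le_mono; [by rewrite zI| by rewrite (le_trans _ y1) ?zI|].
    by apply: le_trans (pi_ge2 R); rewrite ler1n.
  have e : cos 1 * (sin 1 / 2) <= cos z by nra.
  nra.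
- have hs : sin 1 <= sin y.
    rewrite leNgt ltr_sin ?in_itv /= -?leNgt ?(ltW y1) //.
      by rewrite ypi andbT (le_trans _ y0) // oppr_le0 divr_ge0 ?pi_ge0.
    rewrite (pihalf_ge1 R) andbT (le_trans _ ler01) //.
    by rewrite oppr_le0 divr_ge0 ?pi_ge0.
  have y2 : y <= 2 by rewrite (le_trans ypi) // ltW.
  have q : 0 <= sin 1 / 2 * y by rewrite mulr_ge0 // divr_ge0 // ltW.
  have e : cos 1 * (sin 1 / 2) * y <= sin 1 / 2 * y.
    rewrite -mulrA; nra.
  have e2 : sin 1 / 2 * y <= sin 1 by nra.
  lra.
Qed.

Lemma angle_bound (R : realType) : exists K : R, 0 < K /\
  forall t, -1 <= t <= 1 -> acos t ^+ 2 <= K * (1 - t).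
Proof.
have [k [k0 hk]] := sin_lin R.
exists (2 / k ^+ 2); split; first by rewrite divr_gt0 // exprn_gt0.
move=> t tI.
have h0 := acos_ge0 tI; have hpi := acos_lepi tI.
have hc : cos (acos t) = t by apply: acosK; rewrite in_itv.
set th := acos t in h0 hpi hc *.
have hcos : cos th = 1 - 2 * sin (th / 2) ^+ 2.
  have e : cos th = cos ((th / 2) *+ 2).
    by congr cos; rewrite -mulr_natr divfK ?pnatr_eq0.
  rewrite e cos_mulr2n cos2sin2; lra.
have hs := hk (th / 2).
have hs' : k * (th / 2) <= sin (th / 2).
  apply: hs; first by rewrite divr_ge0.
  by rewrite ler_pM2r // invr_gt0.
have hs0 : 0 <= k * (th / 2) by rewrite mulr_ge0 ?(ltW k0) // divr_ge0.
have hsq : (k * (th / 2)) ^+ 2 <= sin (th / 2) ^+ 2.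
  by rewrite ler_sqr // ?nnegrE // (le_trans hs0 hs').
rewrite -hc hcos.
have hk2 : 0 < k ^+ 2 by rewrite exprn_gt0.
have -> : 2 / k ^+ 2 * (1 - (1 - 2 * sin (th / 2) ^+ 2)) =
   (4 * sin (th / 2) ^+ 2) / k ^+ 2.
  by field; rewrite lt0r_neq0.
rewrite ler_pdivlMr //.
move: hsq; rewrite exprMn. set S := sin (th / 2) ^+ 2.
have -> : (th / 2) ^+ 2 = th ^+ 2 / 4 by field.
nra.
Qed.

Lemma dot3E (R : realType) (x y : 'rV[R]_3) : dot3 x y =
  x ord0 ord0 * y ord0 ord0 + x ord0 (lift ord0 ord0) * y ord0 (lift ord0 ord0)
  + x ord0 (lift ord0 (lift ord0 ord0)) * y ord0 (lift ord0 (lift ord0 ord0)).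
Proof. rewrite /dot3 !big_ord_recl big_ord0 addr0 addrA. done. Qed.

Lemma dot_sub (R : realType) (x y : 'rV[R]_3) :
  dot3 (x - y) (x - y) = dot3 x x + dot3 y y - 2 * dot3 x y.
Proof. rewrite !dot3E !mxE; ring. Qed.

Lemma dot_ge0 (R : realType) (x : 'rV[R]_3) : 0 <= dot3 x x.
Proof. rewrite dot3E; nra. Qed.

Lemma dot_CS (R : realType) (x y : 'rV[R]_3) :
  dot3 x y ^+ 2 <= dot3 x x * dot3 y y.
Proof.
rewrite !dot3E.
set a := x _ _; set b := x _ _; set c := x _ _.
set d := y _ _; set e := y _ _; set f := y _ _.
rewrite -subr_ge0.
have -> : (a * a + b * b + c * c) * (d * d + e * e + f * f) -
   (a * d + b * e + c * f) ^+ 2 =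
   (a * e - b * d) ^+ 2 + (a * f - c * d) ^+ 2 + (b * f - c * e) ^+ 2 by ring.
by rewrite !addr_ge0 ?sqr_ge0.
Qed.

Lemma dot_scale (R : realType) (s t : R) (x y : 'rV[R]_3) :
  dot3 (s *: x) (t *: y) = s * t * dot3 x y.
Proof. rewrite !dot3E !mxE; ring. Qed.

Lemma dot_gt0 (R : realType) (x : 'rV[R]_3) : x != 0 -> 0 < dot3 x x.
Proof.
move=> nz; rewrite lt_def dot_ge0 andbT; apply: contra nz => /eqP h.
have h1 : x ord0 ord0 = 0 by move: h; rewrite dot3E; nra.
have h2 : x ord0 (lift ord0 ord0) = 0 by move: h; rewrite dot3E; nra.
have h3 : x ord0 (lift ord0 (lift ord0 ord0)) = 0 by move: h; rewrite dot3E; nra.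
apply/eqP/rowP => i; rewrite mxE.
case: i => [[|[|[|n]]] Hi] //.
- by rewrite -h1; congr (x _ _); apply: val_inj.
- by rewrite -h2; congr (x _ _); apply: val_inj.
- by rewrite -h3; congr (x _ _); apply: val_inj.
Qed.

Set Implicit Arguments. Unset Strict Implicit.

Lemma sq_le {R : realType} (x y : R) : 0 <= y -> x ^+ 2 <= y ^+ 2 -> x <= y.
Proof. move=> y0 h; nra. Qed.

Definition geo {R : realType} (m M u v p a b d A B D : R) : Prop :=
  0 <= u /\ 0 <= v /\ p <= u * v /\ - (u * v) <= p /\
  0 <= a /\ a ^+ 2 = M ^+ 2 + u ^+ 2 /\
  0 <= b /\ b ^+ 2 = M ^+ 2 + v ^+ 2 /\
  0 <= d /\ d ^+ 2 = m ^+ 2 + (u ^+ 2 + v ^+ 2 - 2 * p) /\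
  0 <= A /\ A ^+ 2 = 1 + u ^+ 2 /\
  0 <= B /\ B ^+ 2 = 1 + v ^+ 2 /\
  0 <= D /\ D ^+ 2 = 1 + (u ^+ 2 + v ^+ 2 - 2 * p).

Lemma brk {R : realType} (c z a A : R) : 0 < c -> 0 <= z -> 0 <= a -> 0 <= A ->
  a ^+ 2 = c ^+ 2 + z ^+ 2 -> A ^+ 2 = 1 + z ^+ 2 ->
  [/\ c <= a, z <= a, a <= c + z, 1 <= A & A <= 1 + z] /\
  [/\ 1 + z <= 2 * A, z <= A, c * A <= (1 + c) * a & a <= (1 + c) * A].
Proof.
move=> c0 z0 a0 A0 ea eA.
split; split.
- by apply: sq_le => //; nra.
- by apply: sq_le => //; nra.
- by apply: sq_le; nra.
- by apply: sq_le => //; nra.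
- by apply: sq_le; nra.
- apply: sq_le; nra.
- by apply: sq_le => //; nra.
- apply: sq_le; first nra. rewrite !exprMn ea eA. nra.
- apply: sq_le; first nra. rewrite !exprMn ea eA. nra.
Qed.

Ltac geo_destr G :=
  case: G => hu [hv [hp1 [hp2 [ha [ea [hb [eb [hd [ed [hA [eA [hB [eB [hD eD]]]]]]]]]]]]]].

Lemma geo_H {R : realType} (m M u v p a b d A B D : R) :
  0 < M -> geo m M u v p a b d A B D ->
  M ^+ 2 + u * v <= a * b /\
  (a * b - M ^+ 2 - u * v) * (a * b + M ^+ 2 + u * v) = M ^+ 2 * (u - v) ^+ 2.
Proof.
move=> M0 G; geo_destr G.
have e : (a * b) ^+ 2 = (M ^+ 2 + u ^+ 2) * (M ^+ 2 + v ^+ 2) by rewrite exprMn ea eb.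
split.
  apply: sq_le; first by rewrite mulr_ge0.
  rewrite e -subr_ge0.
  have -> : (M ^+ 2 + u ^+ 2) * (M ^+ 2 + v ^+ 2) - (M ^+ 2 + u * v) ^+ 2 =
    M ^+ 2 * (u - v) ^+ 2 by ring.
  by rewrite mulr_ge0 ?sqr_ge0.
have -> : (a * b - M ^+ 2 - u * v) * (a * b + M ^+ 2 + u * v) =
  (a * b) ^+ 2 - (M ^+ 2 + u * v) ^+ 2 by ring.
rewrite e; ring.
Qed.

Lemma geo_d {R : realType} (m M u v p a b d A B D : R) :
  0 < m -> geo m M u v p a b d A B D ->
  [/\ m <= d, 1 <= D, m * D <= (1 + m) * d & d <= (1 + m) * D] /\
  [/\ (u - v) ^+ 2 <= u ^+ 2 + v ^+ 2 - 2 * p, D <= A + B & D <= 1 + u + v].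
Proof.
move=> m0 G; geo_destr G.
have e0 : 0 <= u ^+ 2 + v ^+ 2 - 2 * p by have := sqr_ge0 (u - v); nra.
have eA' : A ^+ 2 = 1 ^+ 2 + u ^+ 2 by rewrite expr1n.
have eB' : B ^+ 2 = 1 ^+ 2 + v ^+ 2 by rewrite expr1n.
have [[_ uA _ A1 _] _] := @brk _ 1 u A A ltr01 hu hA hA eA' eA.
have [[_ vB _ B1 _] _] := @brk _ 1 v B B ltr01 hv hB hB eB' eB.
split; split.
- by apply: sq_le => //; nra.
- by apply: sq_le => //; nra.
- apply: sq_le; first nra. rewrite !exprMn ed eD. nra.
- apply: sq_le; first nra. rewrite !exprMn ed eD. nra.
- nra.
- apply: sq_le; first nra. nra.
- apply: sq_le; first nra. nra.
Qed.

Lemma geo_far {R : realType} (m M u v p a b d A B D : R) :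
  0 < M -> geo m M u v p a b d A B D -> u <= v -> 2 * u + 1 <= v ->
  M ^+ 2 * (1 + v) <= 12 * (1 + M) ^+ 2 * (1 + u) * (a * b - M ^+ 2 - u * v).
Proof.
move=> M0 G uv far.
have [H0 HE] := geo_H M0 G.
geo_destr G.
have [[Ma ua au _ _] _] := @brk _ M u a A M0 hu ha hA ea eA.
have [[Mb vb bv _ _] _] := @brk _ M v b B M0 hv hb hB eb eB.
set H := a * b - M ^+ 2 - u * v in HE *.
have H0' : 0 <= H by rewrite /H; lra.
set X := (1 + M) ^+ 2 * ((1 + u) * (1 + v)).
have X1 : (1 + M) ^+ 2 <= X.
  rewrite /X -{1}[(1 + M) ^+ 2]mulr1 ler_wpM2l ?sqr_ge0 //; nra.
have S1 : a * b <= X.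
  have e1 : a <= (1 + M) * (1 + u) by nra.
  have e2 : b <= (1 + M) * (1 + v) by nra.
  have -> : X = ((1 + M) * (1 + u)) * ((1 + M) * (1 + v)) by rewrite /X; ring.
  by apply: ler_pM.
have S2 : M ^+ 2 <= X by apply: le_trans X1; nra.
have S3 : u * v <= X.
  apply: (@le_trans _ _ ((1 + u) * (1 + v))); first nra.
  rewrite /X -{1}[(1 + u) * (1 + v)]mul1r ler_wpM2r //; nra.
have S : a * b + M ^+ 2 + u * v <= 3 * X by lra.
have T0 : 1 + v <= 2 * (v - u) by lra.
have T : (1 + v) ^+ 2 <= 4 * (u - v) ^+ 2.
  have -> : 4 * (u - v) ^+ 2 = (2 * (v - u)) ^+ 2 by ring.
  by rewrite ler_sqr ?nnegrE //; lra.
have h1 : M ^+ 2 * (1 + v) ^+ 2 <= 4 * (H * (a * b + M ^+ 2 + u * v)).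
  rewrite HE.
  have -> : 4 * (M ^+ 2 * (u - v) ^+ 2) = M ^+ 2 * (4 * (u - v) ^+ 2) by ring.
  by rewrite ler_wpM2l ?sqr_ge0.
have h2 : H * (a * b + M ^+ 2 + u * v) <= H * (3 * X) by rewrite ler_wpM2l.
have v0 : 0 < 1 + v by lra.
rewrite -(ler_pM2r v0).
have -> : M ^+ 2 * (1 + v) * (1 + v) = M ^+ 2 * (1 + v) ^+ 2 by ring.
have -> : 12 * (1 + M) ^+ 2 * (1 + u) * H * (1 + v) = 4 * (H * (3 * X)).
  by rewrite /X; ring.
lra.
Qed.

Lemma geo_same {R : realType} (m M u v p a b d A B D mu : R) :
  0 < M -> geo m M u v p a b d A B D ->
  (mu = d + a - b \/ mu = d - a + b) ->
  m ^+ 2 + 2 * (u * v - p) + 2 * (a * b - M ^+ 2 - u * v) <= `|mu| * (2 * d).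
Proof.
move=> M0 G hmu.
have [H0 HE] := geo_H M0 G.
geo_destr G.
have hab : (a - b) ^+ 2 <= d ^+ 2.
  have : (a - b) ^+ 2 = 2 * M ^+ 2 + u ^+ 2 + v ^+ 2 - 2 * (a * b).
    by rewrite sqrrB ea eb; ring.
  move=> ->; rewrite ed; nra.
have hab' : - d <= a - b <= d by apply/andP; split; nra.
case: hmu => ->.
- have e : (d + a - b) * (d - a + b) =
    m ^+ 2 + 2 * (u * v - p) + 2 * (a * b - M ^+ 2 - u * v).
    have -> : (d + a - b) * (d - a + b) = d ^+ 2 - (a - b) ^+ 2 by ring.
    rewrite ed sqrrB ea eb; ring.
  rewrite -e.
  have hz : `|d - a + b| <= 2 * d by rewrite ler_norml; apply/andP; split; lra.
  rewrite (le_trans (ler_norm _)) // normrM ler_wpM2l //.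
- have e : (d - a + b) * (d + a - b) =
    m ^+ 2 + 2 * (u * v - p) + 2 * (a * b - M ^+ 2 - u * v).
    have -> : (d - a + b) * (d + a - b) = d ^+ 2 - (a - b) ^+ 2 by ring.
    rewrite ed sqrrB ea eb; ring.
  rewrite -e.
  have hz : `|d + a - b| <= 2 * d by rewrite ler_norml; apply/andP; split; lra.
  rewrite (le_trans (ler_norm _)) // normrM ler_wpM2l //.
Qed.

Lemma far_Q {R : realType} (m M u v p a b d A B D : R) :
  0 < M -> geo m M u v p a b d A B D -> u <= v -> 2 * u + 1 <= v ->
  1 + v <= (12 * (1 + M) ^+ 2 / M ^+ 2) * (1 + u) * (a * b - M ^+ 2 - u * v).
Proof.
move=> M0 G uv far.
have h := geo_far M0 G uv far.
have M2 : 0 < M ^+ 2 by rewrite exprn_gt0.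
have -> : 12 * (1 + M) ^+ 2 / M ^+ 2 * (1 + u) * (a * b - M ^+ 2 - u * v) =
  (12 * (1 + M) ^+ 2 * (1 + u) * (a * b - M ^+ 2 - u * v)) / M ^+ 2.
  by field; rewrite lt0r_neq0.
by rewrite ler_pdivlMr // mulrC.
Qed.

Definition Qc {R : realType} (M : R) := 12 * (1 + M) ^+ 2 / M ^+ 2.
Definition KS {R : realType} (m M : R) := 2 + 16 / m ^+ 2 + 8 * Qc M.

Lemma KS_gt0 {R : realType} (m M : R) : 0 < m -> 0 < M -> 0 < KS m M.
Proof.
move=> m0 M0; rewrite /KS /Qc.
have : 0 < 16 / m ^+ 2 by rewrite divr_gt0 // exprn_gt0.
have : 0 < 12 * (1 + M) ^+ 2 / M ^+ 2.
  by rewrite divr_gt0 ?exprn_gt0 // mulr_gt0 // exprn_gt0 // addr_gt0.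
lra.
Qed.

Lemma brk1 {R : realType} (z A : R) : 0 <= z -> 0 <= A -> A ^+ 2 = 1 + z ^+ 2 ->
  [/\ 1 <= A, z <= A, A <= 1 + z & 1 + z <= 2 * A].
Proof.
move=> z0 A0 eA.
have eA' : A ^+ 2 = 1 ^+ 2 + z ^+ 2 by rewrite expr1n.
have [[_ ? ? ? _] [? _ _ _]] := @brk _ 1 z A A ltr01 z0 A0 A0 eA' eA.
by split.
Qed.

Lemma mc1 {R : realType} (u v w : R) : 1 <= u -> u <= v -> 0 <= w ->
  (1 + u) * (1 + v) * w <= 4 * (u * v * w).
Proof. move=> u1 uv w0; have : (1 + u) * (1 + v) <= 4 * (u * v) by nra. nra. Qed.

Lemma mc2 {R : realType} (u v w : R) : 0 <= u -> u <= 1 -> 0 <= v -> v <= 2 * u + 1 ->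
  0 <= w -> w <= 2 -> (1 + u) * (1 + v) * w <= 16.
Proof. move=> *; have : (1 + u) * (1 + v) <= 8 by nra. nra. Qed.

Lemma mc3 {R : realType} (u v w : R) : 0 <= u -> u <= 1 -> 0 <= v ->
  0 <= w -> w <= 2 -> (1 + u) * (1 + v) * w <= 4 * (1 + v).
Proof. move=> *; have : (1 + u) * (1 + v) <= 2 * (1 + v) by nra. nra. Qed.

Lemma ABw_le {R : realType} (u v w A B : R) : 0 <= A -> 0 <= B -> 0 <= w ->
  A <= 1 + u -> B <= 1 + v -> A * B * w <= (1 + u) * (1 + v) * w.
Proof. move=> *; apply: ler_wpM2r => //; apply: ler_pM => //. Qed.

Lemma cN_le {R : realType} (c K N : R) : 0 <= N -> c <= K -> c * N <= K * N.
Proof. by move=> N0 cK; apply: ler_wpM2r. Qed.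

Lemma Qc_gt0 {R : realType} (M : R) : 0 < M -> 0 < Qc M.
Proof.
by move=> M0; rewrite /Qc divr_gt0 ?exprn_gt0 // mulr_gt0 // exprn_gt0 // addr_gt0.
Qed.

Lemma inv_sq {R : realType} (m c : R) : 0 < m -> c / m ^+ 2 * m ^+ 2 = c.
Proof. by move=> m0; rewrite divfK // expf_neq0 // lt0r_neq0. Qed.

Lemma same_AB {R : realType} (m M u v p a b d A B D w : R) :
  0 < m -> 0 < M -> geo m M u v p a b d A B D -> u <= v ->
  0 <= w -> w <= 2 -> u * v * w = u * v - p ->
  A * B * w <= KS m M * (m ^+ 2 + 2 * (u * v - p) + 2 * (a * b - M ^+ 2 - u * v)).
Proof.
move=> m0 M0 G uv w0 w2 ew.
have [H0 _] := geo_H M0 G.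
have hq := far_Q M0 G uv.
have G' := G.
geo_destr G'.
have [A1 uA Au _] := brk1 hu hA eA.
have [B1 vB Bv _] := brk1 hv hB eB.
rewrite -/(Qc M) in hq.
move: H0 hq; set H := a * b - M ^+ 2 - u * v => H0 hq.
have H0' : 0 <= H by rewrite /H; lra.
have t0 : 0 <= u * v - p by lra.
have m2 : 0 <= m ^+ 2 by rewrite sqr_ge0.
set N := m ^+ 2 + 2 * (u * v - p) + 2 * H.
have N0 : 0 <= N by rewrite /N; lra.
have Q0 := Qc_gt0 M0.
have i16e : 16 / m ^+ 2 * m ^+ 2 = 16 := inv_sq 16 m0.
have i16p : 0 < 16 / m ^+ 2 by rewrite divr_gt0 // exprn_gt0.
move: i16e i16p; rewrite /KS; set i16 := 16 / m ^+ 2 => i16e i16p.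
have ABw := ABw_le hA hB w0 Au Bv.
apply: le_trans ABw _.
have [u1|u1] := lerP 1 u.
- have h := mc1 u1 uv w0.
  have h2 : (1 + u) * (1 + v) * w <= 2 * N by rewrite /N; lra.
  apply: le_trans h2 _; apply: cN_le => //; lra.
- have [v3|v3] := lerP v (2 * u + 1).
  + have h := mc2 hu (ltW u1) hv v3 w0 w2.
    have h2 : 16 <= i16 * N.
      rewrite -i16e; apply: ler_wpM2l; [lra| rewrite /N; lra].
    have h3 : (1 + u) * (1 + v) * w <= i16 * N by lra.
    apply: le_trans h3 _; apply: cN_le => //; lra.
  + have h := mc3 hu (ltW u1) hv w0 w2.
    have hq' := hq (ltW v3).
    have h4 : Qc M * (1 + u) * H <= (2 * Qc M) * H.
      apply: ler_wpM2r => //; rewrite mulrC; apply: ler_wpM2r; lra.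
    have h5 : (2 * Qc M) * H <= Qc M * N.
      have -> : 2 * Qc M * H = Qc M * (2 * H) by ring.
      apply: ler_wpM2l; [lra| rewrite /N; lra].
    have h3 : (1 + u) * (1 + v) * w <= (4 * Qc M) * N.
      have -> : 4 * Qc M * N = 4 * (Qc M * N) by ring.
      lra.
    apply: le_trans h3 _; apply: cN_le => //; lra.
Qed.


Lemma geo_swap {R : realType} (m M u v p a b d A B D : R) :
  geo m M u v p a b d A B D -> geo m M v u p b a d B A D.
Proof.
move=> G; geo_destr G.
rewrite /geo mulrC [v ^+ 2 + _]addrC; do !split => //.
Qed.

Lemma same_D {R : realType} (m M u v p a b d A B D : R) :
  0 < m -> 0 < M -> geo m M u v p a b d A B D -> u <= v ->
  D <= KS m M * (m ^+ 2 + 2 * (u * v - p) + 2 * (a * b - M ^+ 2 - u * v)) * A.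
Proof.
move=> m0 M0 G uv.
have [H0 _] := geo_H M0 G.
have hq := far_Q M0 G uv.
have [[_ _ _ _] [_ _ D1]] := geo_d m0 G.
have G' := G.
geo_destr G'.
have [A1 uA Au uA2] := brk1 hu hA eA.
rewrite -/(Qc M) in hq.
move: H0 hq; set H := a * b - M ^+ 2 - u * v => H0 hq.
have H0' : 0 <= H by rewrite /H; lra.
have t0 : 0 <= u * v - p by lra.
have m2 : 0 <= m ^+ 2 by rewrite sqr_ge0.
set N := m ^+ 2 + 2 * (u * v - p) + 2 * H.
have N0 : 0 <= N by rewrite /N; lra.
have Q0 := Qc_gt0 M0.
have i16e : 16 / m ^+ 2 * m ^+ 2 = 16 := inv_sq 16 m0.
have i16p : 0 < 16 / m ^+ 2 by rewrite divr_gt0 // exprn_gt0.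
move: i16e i16p; rewrite /KS; set i16 := 16 / m ^+ 2 => i16e i16p.
have NA : 0 <= N * A by rewrite mulr_ge0 //; lra.
have [v3|v3] := lerP v (2 * u + 1).
- have h2 : 16 <= i16 * N.
    rewrite -i16e; apply: ler_wpM2l; [lra| rewrite /N; lra].
  have h3 : 16 * A <= i16 * N * A by apply: ler_wpM2r => //; lra.
  have h4 : i16 * N * A <= (2 + i16 + 8 * Qc M) * N * A.
    apply: ler_wpM2r; first lra. apply: ler_wpM2r => //; lra.
  lra.
- have hq' := hq (ltW v3).
  have h4 : Qc M * (1 + u) * H <= (2 * Qc M) * (A * H).
    have -> : 2 * Qc M * (A * H) = Qc M * (2 * A) * H by ring.
    apply: ler_wpM2r => //; apply: ler_wpM2l; lra.
  have h5 : (2 * Qc M) * (A * H) <= Qc M * (N * A).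
    have -> : 2 * Qc M * (A * H) = Qc M * (A * (2 * H)) by ring.
    rewrite [N * A]mulrC.
    apply: ler_wpM2l; first lra.
    apply: ler_wpM2l; [lra| rewrite /N; lra].
  have h6 : D <= (2 * Qc M) * (N * A).
    have -> : 2 * Qc M * (N * A) = 2 * (Qc M * (N * A)) by ring.
    lra.
  have h7 : (2 * Qc M) * (N * A) <= (2 + i16 + 8 * Qc M) * (N * A).
    apply: cN_le => //; lra.
  lra.
Qed.

Lemma KS_m2 {R : realType} (m M : R) : 0 < m -> 0 < M -> 16 <= KS m M * m ^+ 2.
Proof.
move=> m0 M0; rewrite /KS.
have := inv_sq 16 m0; have := Qc_gt0 M0; set i := 16 / m ^+ 2 => Q0 ie.
have : 0 <= m ^+ 2 by rewrite sqr_ge0.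
nra.
Qed.

Lemma same_all {R : realType} (m M u v p a b d A B D mu : R) :
  0 < m -> 0 < M -> geo m M u v p a b d A B D ->
  (mu = d + a - b \/ mu = d - a + b) ->
  (forall w, 0 <= w -> w <= 2 -> u * v * w = u * v - p ->
     A * B * w <= 2 * (1 + m) * KS m M * `|mu| * D) /\
  1 <= 2 * (1 + m) * KS m M * `|mu| * D /\
  1 <= 2 * (1 + m) * KS m M * `|mu| * A /\
  1 <= 2 * (1 + m) * KS m M * `|mu| * B.
Proof.
move=> m0 M0 G hmu.
have hN := geo_same M0 G hmu.
have [[md D1 _ dD] _] := geo_d m0 G.
have KS0 := KS_gt0 m0 M0.
have K16 := KS_m2 m0 M0.
have G' := G.
geo_destr G'.
have [A1 _ _ _] := brk1 hu hA eA.
have [B1 _ _ _] := brk1 hv hB eB.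
set N := m ^+ 2 + 2 * (u * v - p) + 2 * (a * b - M ^+ 2 - u * v) in hN.
have hmu0 : 0 <= `|mu| := normr_ge0 mu.
have hNZ : N <= 2 * (1 + m) * (`|mu| * D).
  apply: le_trans hN _.
  have -> : 2 * (1 + m) * (`|mu| * D) = `|mu| * (2 * ((1 + m) * D)) by ring.
  apply: ler_wpM2l => //; lra.
have [H0 _] := geo_H M0 G.
have hN0 : m ^+ 2 <= N by rewrite /N; lra.
have N0 : 0 <= N by have := sqr_ge0 m; lra.
have key : (forall w, 0 <= w -> w <= 2 -> u * v * w = u * v - p ->
     A * B * w <= KS m M * N) /\ D <= KS m M * N * A /\ D <= KS m M * N * B.
  have [uv|vu] := lerP u v.
  - have AB : A <= B by apply: sq_le => //; rewrite eA eB; nra.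
    split; first by move=> w w0 w2 ew; exact: (same_AB m0 M0 G uv w0 w2 ew).
    have h := same_D m0 M0 G uv; rewrite -/N in h; split => //.
    apply: le_trans h _; apply: ler_wpM2l => //.
    by rewrite mulr_ge0 // ltW.
  - have G2 := geo_swap G.
    have BA : B <= A by apply: sq_le => //; rewrite eA eB; nra.
    have eN : m ^+ 2 + 2 * (v * u - p) + 2 * (b * a - M ^+ 2 - v * u) = N.
      by rewrite /N [v * u]mulrC [b * a]mulrC.
    split.
      move=> w w0 w2 ew; rewrite [A * B]mulrC -eN.
      have ew' : v * u * w = v * u - p by rewrite [v * u]mulrC.
      exact: (same_AB m0 M0 G2 (ltW vu) w0 w2 ew').
    have h := same_D m0 M0 G2 (ltW vu); rewrite eN in h; split => //.
    apply: le_trans h _; apply: ler_wpM2l => //.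
    by rewrite mulr_ge0 // ltW.
case: key => [kAB [kDA kDB]].
have KNZ : KS m M * N <= 2 * (1 + m) * KS m M * (`|mu| * D).
  have -> : 2 * (1 + m) * KS m M * (`|mu| * D) = KS m M * (2 * (1 + m) * (`|mu| * D)) by ring.
  by apply: ler_wpM2l => //; lra.
have KN1 : 1 <= KS m M * N.
  have : KS m M * m ^+ 2 <= KS m M * N by apply: ler_wpM2l => //; lra.
  lra.
split.
  move=> w w0 w2 ew; have := kAB w w0 w2 ew; rewrite -mulrA; lra.
split; first by rewrite -mulrA; lra.
set K := 2 * (1 + m) * KS m M in KNZ *.
have D0 : 0 < D by lra.
split.
- have : D <= K * `|mu| * A * D.
    apply: le_trans kDA _.
    have -> : K * `|mu| * A * D = (K * (`|mu| * D)) * A by ring.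
    apply: ler_wpM2r; lra.
  by rewrite -{1}[D]mul1r ler_pM2r.
- have : D <= K * `|mu| * B * D.
    apply: le_trans kDB _.
    have -> : K * `|mu| * B * D = (K * (`|mu| * D)) * B by ring.
    apply: ler_wpM2r; lra.
  by rewrite -{1}[D]mul1r ler_pM2r.
Qed.


Lemma dm_basic {R : realType} (m M u v p a b d A B D : R) :
  0 < m -> m < 2 * M -> geo m M u v p a b d A B D ->
  [/\ d <= a + b, `|d - a - b| = a + b - d &
   4 * M ^+ 2 - m ^+ 2 + 2 * (u * v + p) + 2 * (a * b - M ^+ 2 - u * v)
     <= `|d - a - b| * (2 * (a + b))].
Proof.
move=> m0 mM G.
have M0 : 0 < M by lra.
have [H0 _] := geo_H M0 G.
geo_destr G.
have e : (a + b) ^+ 2 - d ^+ 2 =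
  4 * M ^+ 2 - m ^+ 2 + 2 * (u * v + p) + 2 * (a * b - M ^+ 2 - u * v).
  by rewrite sqrrD ea eb ed; ring.
have dl : 0 < 4 * M ^+ 2 - m ^+ 2.
  have -> : 4 * M ^+ 2 - m ^+ 2 = (2 * M - m) * (2 * M + m) by ring.
  by rewrite mulr_gt0 //; lra.
have hP : 0 <= 4 * M ^+ 2 - m ^+ 2 + 2 * (u * v + p) + 2 * (a * b - M ^+ 2 - u * v) by lra.
have dab : d <= a + b by apply: sq_le; lra.
have en : `|d - a - b| = a + b - d.
  have -> : d - a - b = - (a + b - d) by ring.
  by rewrite normrN ger0_norm //; lra.
split => //.
rewrite en -e.
have -> : (a + b) ^+ 2 - d ^+ 2 = (a + b - d) * (a + b + d) by ring.
apply: ler_wpM2l; lra.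
Qed.

Lemma scale_le {R : realType} (c k K x y : R) : 0 < c -> 0 <= y ->
  c * x <= k * y -> k / c <= K -> x <= K * y.
Proof.
move=> c0 y0 h hK.
have : x <= k / c * y.
  rewrite mulrAC ler_pdivlMr // mulrC; lra.
move=> h2; apply: le_trans h2 _; exact: ler_wpM2r.
Qed.

Lemma dm_1b {R : realType} (m M : R) : 0 < m -> m < 2 * M ->
  exists K, 0 < K /\ forall u v p a b d A B D : R,
  geo m M u v p a b d A B D -> d <= a / 2 -> d <= b / 2 ->
  D <= K * `|d - a - b| /\ A <= K * `|d - a - b| /\ B <= K * `|d - a - b| /\
  1 <= K * `|d - a - b|.
Proof.
move=> m0 mM.
have M0 : 0 < M by lra.
have c1 : 0 < (1 + m) / m by rewrite divr_gt0 //; lra.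
have c2 : 0 < 2 * (1 + M) / M by rewrite divr_gt0 //; lra.
have c3 : 0 < 1 / M by rewrite divr_gt0 //; lra.
exists ((1 + m) / m + 2 * (1 + M) / M + 1 / M); split; first lra.
move=> u v p a b d A B D G da db.
have [dab en _] := dm_basic m0 mM G.
have [[md D1 mD dD] _] := geo_d m0 G.
have G' := G.
geo_destr G'.
have [[Ma _ _ _ _] [_ _ MA _]] := @brk _ M u a A M0 hu ha hA ea eA.
have [[Mb _ _ _ _] [_ _ MB _]] := @brk _ M v b B M0 hv hb hB eb eB.
rewrite en.
have Y0 : 0 <= a + b - d by lra.
split; last split; last split.
- apply: (@scale_le _ m (1 + m)) => //; [nra | lra].
- apply: (@scale_le _ M (2 * (1 + M))) => //; [nra | lra].
- apply: (@scale_le _ M (2 * (1 + M))) => //; [nra | lra].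
- apply: (@scale_le _ M 1) => //; lra.
Qed.


Lemma mB1 {R : realType} (u v w : R) : 1 <= u -> u <= v -> v <= 2 * u + 1 -> 0 <= w ->
  (1 + v ^+ 2) * w <= 6 * (u * v * w).
Proof. move=> *; have : 1 + v ^+ 2 <= 6 * (u * v) by nra. nra. Qed.

Lemma mB2 {R : realType} (u v w : R) : 0 <= u -> u <= 1 -> 0 <= v -> v <= 2 * u + 1 ->
  0 <= w -> w <= 2 -> (1 + v ^+ 2) * w <= 20.
Proof. move=> *; have : 1 + v ^+ 2 <= 10 by nra. nra. Qed.

Lemma div_le1 {R : realType} (k c x y : R) : 0 < c -> c <= k * x * y -> 1 <= (k / c) * x * y.
Proof.
move=> c0 h; have -> : k / c * x * y = (k * x * y) / c by field; rewrite lt0r_neq0.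
by rewrite ler_pdivlMr // mul1r.
Qed.

Lemma dm_2b_arith {R : realType} (u v w A B D Y P H dl F c K1 Q : R) :
  0 <= u -> u <= v -> 0 <= w -> w <= 2 -> 1 <= A -> 1 <= B -> 1 <= D -> 0 <= Y ->
  0 <= H -> 0 < dl -> 0 < F -> 0 < c -> 0 < Q ->
  K1 = 3 + 20 / dl ->
  P <= F * Y * B -> dl <= P -> 2 * (u * v * w) <= P -> 2 * H <= P ->
  B <= 1 + v -> 1 + u <= 2 * A -> A <= 1 + u -> B ^+ 2 = 1 + v ^+ 2 ->
  (v <= 2 * u + 1 -> A <= c * D) ->
  (2 * u + 1 <= v -> B <= 2 * D /\ 1 + v <= Q * (1 + u) * H) ->
  A * B * w <= F * (K1 * c + 2 * (2 + 4 * Q)) * Y * D.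
Proof.
move=> u0 uv w0 w2 A1 B1 D1 Y0 H0 dl0 F0 c0 Q0 eK1 PB Pd Pt PH Bv uA Au eB s1 s2.
have idl : 0 < 1 / dl by rewrite divr_gt0.
have K10 : 0 < K1 by rewrite eK1 addr_gt0 // divr_gt0.
have FY : 0 <= F * Y by rewrite mulr_ge0 // ltW.
have [v3|v3] := lerP v (2 * u + 1).
- have AD := s1 v3.
  have BBw : B * B * w <= K1 * P.
    have -> : B * B * w = (1 + v ^+ 2) * w by rewrite -eB expr2.
    have [u1|u1] := lerP 1 u.
    + have h := mB1 u1 uv v3 w0.
      apply: le_trans h _; rewrite eK1.
      have : 0 <= 20 / dl * P by rewrite mulr_ge0 // ?divr_ge0 //; lra.
      rewrite mulrDl; lra.
    + have h := mB2 u0 (ltW u1) (le_trans u0 uv) v3 w0 w2.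
      apply: le_trans h _; rewrite eK1 mulrDl.
      have : 20 <= 20 / dl * P.
        have -> : 20 / dl * P = 20 * (P / dl) by rewrite mulrAC mulrA.
        rewrite -{1}[20]mulr1 ler_wpM2l // ler_pdivlMr //; lra.
      have : 0 <= P by lra.
      nra.
  have Bw : B * w <= K1 * F * Y.
    have : B * (B * w) <= B * (K1 * F * Y).
      have : K1 * P <= K1 * (F * Y * B) by apply: ler_wpM2l => //; lra.
      have -> : B * (K1 * F * Y) = K1 * (F * Y * B) by ring.
      rewrite mulrA; lra.
    by rewrite ler_pM2l //; lra.
  have : A * B * w <= c * D * (K1 * F * Y).
    rewrite -mulrA; apply: ler_pM => //; try lra.
    by rewrite mulr_ge0 //; lra.
  move=> h; apply: le_trans h _.
  have -> : c * D * (K1 * F * Y) = (F * (K1 * c) * Y) * D by ring.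
  apply: ler_wpM2r; first lra.
  apply: ler_wpM2r => //.
  apply: ler_wpM2l; first lra.
  have : 0 <= 2 * (2 + 4 * Q) by rewrite mulr_ge0 //; lra.
  lra.
- have [BD hq] := s2 (ltW v3).
  have ABw : A * B * w <= (1 + u) * (1 + v) * w.
    apply: ler_wpM2r => //; apply: ler_pM; lra.
  have hc : (1 + u) * (1 + v) * w <= (2 + 4 * Q) * P.
    have [u1|u1] := lerP 1 u.
    + have h := mc1 u1 uv w0.
      have : 0 <= 4 * Q * P by rewrite mulr_ge0 //; lra.
      rewrite mulrDl; lra.
    + have h := mc3 u0 (ltW u1) (le_trans u0 uv) w0 w2.
      have h4 : Q * (1 + u) * H <= (2 * Q) * H.
        apply: ler_wpM2r => //; rewrite mulrC; apply: ler_wpM2r; lra.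
      have h5 : Q * (2 * H) <= Q * P by apply: ler_wpM2l; lra.
      have : 0 <= 2 * P by lra.
      rewrite mulrDl; lra.
  have hP : (2 + 4 * Q) * P <= (2 + 4 * Q) * (F * Y * (2 * D)).
    apply: ler_wpM2l; first lra.
    apply: le_trans PB _; apply: ler_wpM2l => //; lra.
  have : A * B * w <= (F * (2 * (2 + 4 * Q)) * Y) * D.
    have -> : F * (2 * (2 + 4 * Q)) * Y * D = (2 + 4 * Q) * (F * Y * (2 * D)) by ring.
    lra.
  move=> h; apply: le_trans h _.
  apply: ler_wpM2r; first lra.
  apply: ler_wpM2r => //.
  apply: ler_wpM2l; first lra.
  have : 0 <= K1 * c by rewrite mulr_ge0 //; lra.
  lra.
Qed.

Lemma dm_2b_t4 {R : realType} (u v A B D Y P H dl F c Q : R) :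
  0 <= u -> u <= v -> 1 <= A -> 1 <= B -> 1 <= D -> 0 <= Y ->
  0 <= H -> 0 < dl -> 0 < F -> 0 < c -> 0 < Q ->
  P <= F * Y * B -> dl <= P -> 2 * H <= P ->
  B <= 1 + v -> 1 + u <= 2 * A ->
  (v <= 2 * u + 1 -> A <= c * D) ->
  (2 * u + 1 <= v -> B <= 2 * D /\ 1 + v <= Q * (1 + u) * H) ->
  let K4 := F * ((4 * c + 7) / dl + Q) in
  1 <= K4 * Y * A /\ 1 <= K4 * Y * B /\ 1 <= K4 * Y * D.
Proof.
move=> u0 uv A1 B1 D1 Y0 H0 dl0 F0 c0 Q0 PB Pd PH Bv uA s1 s2 K4.
have dFYB : dl <= F * Y * B by lra.
have i0 : 0 <= (4 * c + 7) / dl by rewrite divr_ge0 //; lra.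
have K40 : 0 <= K4 by rewrite /K4 mulr_ge0 //; lra.
have gen : forall X k, 0 <= X -> 0 <= k -> k <= 4 * c + 7 ->
    dl <= F * Y * (k * X) -> 1 <= K4 * Y * X.
  move=> X k X0 k0 kc h.
  have h1 : 1 <= (F * k / dl) * Y * X.
    have -> : F * k / dl * Y * X = (F * Y * (k * X)) / dl by field; rewrite lt0r_neq0.
    by rewrite ler_pdivlMr // mul1r.
  apply: le_trans h1 _.
  apply: ler_wpM2r => //; apply: ler_wpM2r => //.
  rewrite /K4 -mulrA ler_wpM2l //; first lra.
  have : k / dl <= (4 * c + 7) / dl by rewrite ler_pM2r // invr_gt0.
  have : 0 <= Q by lra.
  lra.
split; last split.
- have [v3|v3] := lerP v (2 * u + 1).
  + apply: (gen A 4) => //; try lra.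
    apply: le_trans dFYB _; apply: ler_wpM2l; first by rewrite mulr_ge0 //; lra.
    lra.
  + have [BD hq] := s2 (ltW v3).
    have h1 : B <= Q * A * P.
      have : Q * (1 + u) * H <= Q * (2 * A) * H.
        apply: ler_wpM2r => //; apply: ler_wpM2l; lra.
      have : Q * (2 * A) * H <= Q * A * P.
        have -> : Q * (2 * A) * H = Q * A * (2 * H) by ring.
        apply: ler_wpM2l; [rewrite mulr_ge0 //; lra | lra].
      lra.
    have h2 : B <= Q * A * (F * Y * B).
      apply: le_trans h1 _; apply: ler_wpM2l => //; rewrite mulr_ge0 //; lra.
    have h3 : 1 <= Q * F * Y * A.
      have : B * 1 <= B * (Q * F * Y * A).
        by rewrite mulr1; apply: le_trans h2 _; rewrite le_eqVlt; apply/orP; left; apply/eqP; ring.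
      by rewrite ler_pM2l //; lra.
    apply: le_trans h3 _.
    apply: ler_wpM2r; first lra; apply: ler_wpM2r => //.
    rewrite /K4 [Q * F]mulrC ler_wpM2l //; first lra.
    lra.
- apply: (gen B 1) => //; try lra.
- have BD : B <= (4 * c + 2) * D.
    have [v3|v3] := lerP v (2 * u + 1).
    + have := s1 v3; have : 0 <= c * D by rewrite mulr_ge0 //; lra.
      rewrite mulrDl; lra.
    + have [BD _] := s2 (ltW v3).
      have : 0 <= c * D by rewrite mulr_ge0 //; lra.
      rewrite mulrDl; lra.
  apply: (gen D (4 * c + 2)) => //; try lra.
  apply: le_trans dFYB _; apply: ler_wpM2l => //; rewrite mulr_ge0 //; lra.
Qed.


Definition Kdm {R : realType} (m M : R) : R :=
  let dl := 4 * M ^+ 2 - m ^+ 2 in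
  let F := 4 * (1 + M) in
  let c := 2 * (1 + M) * (1 + m) / M in
  F * ((3 + 20 / dl) * c + 2 * (2 + 4 * Qc M)) + F * ((4 * c + 7) / dl + Qc M).

Lemma Kdm_gt0 {R : realType} (m M : R) : 0 < m -> m < 2 * M -> 0 < Kdm m M.
Proof.
move=> m0 mM; have M0 : 0 < M by lra.
rewrite /Kdm.
have dl0 : 0 < 4 * M ^+ 2 - m ^+ 2.
  have -> : 4 * M ^+ 2 - m ^+ 2 = (2 * M - m) * (2 * M + m) by ring.
  by rewrite mulr_gt0 //; lra.
have c0 : 0 < 2 * (1 + M) * (1 + m) / M by rewrite divr_gt0 // !mulr_gt0 //; lra.
have Q0 := Qc_gt0 M0.
have i1 : 0 < 20 / (4 * M ^+ 2 - m ^+ 2) by rewrite divr_gt0.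
have i2 : 0 < (4 * (2 * (1 + M) * (1 + m) / M) + 7) / (4 * M ^+ 2 - m ^+ 2).
  by rewrite divr_gt0 //; lra.
have j1 : 0 < (3 + 20 / (4 * M ^+ 2 - m ^+ 2)) * (2 * (1 + M) * (1 + m) / M).
  by rewrite mulr_gt0 //; lra.
have j2 : 0 < 4 * (1 + M) by lra.
apply: addr_gt0; apply: mulr_gt0 => //; lra.
Qed.

Lemma dm_2b {R : realType} (m M u v p a b d A B D : R) :
  0 < m -> m < 2 * M ->
  geo m M u v p a b d A B D -> u <= v -> a / 2 < d ->
  (forall w, 0 <= w -> w <= 2 -> u * v * w = u * v + p ->
     A * B * w <= Kdm m M * `|d - a - b| * D) /\
  1 <= Kdm m M * `|d - a - b| * A /\ 1 <= Kdm m M * `|d - a - b| * B /\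
  1 <= Kdm m M * `|d - a - b| * D.
Proof.
move=> m0 mM G uv da.
have M0 : 0 < M by lra.
have [dab en hP] := dm_basic m0 mM G.
have [[md D1 mD dD] [e2 DAB DUV]] := geo_d m0 G.
have [H0 _] := geo_H M0 G.
have hq := far_Q M0 G uv.
have G' := G.
geo_destr G'.
have [[Ma _ _ _ _] [_ _ MA aA]] := @brk _ M u a A M0 hu ha hA ea eA.
have [[Mb _ _ _ _] [_ _ MB bB]] := @brk _ M v b B M0 hv hb hB eb eB.
have [A1 uA Au uA2] := brk1 hu hA eA.
have [B1 vB Bv vB2] := brk1 hv hB eB.
have ab : a <= b by apply: sq_le => //; rewrite ea eb; nra.
have s2 : 2 * u + 1 <= v -> B <= 2 * D.
  move=> v3; have : v - u <= D by apply: sq_le => //; lra.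
  lra.
set dl := 4 * M ^+ 2 - m ^+ 2 in hP.
set F := 4 * (1 + M).
set c := 2 * (1 + M) * (1 + m) / M.
have s1 : A <= c * D.
  have h : M * A <= 2 * (1 + M) * (1 + m) * D.
    apply: le_trans MA _.
    have : a <= 2 * ((1 + m) * D) by lra.
    move=> h; have -> : 2 * (1 + M) * (1 + m) * D = (1 + M) * (2 * ((1 + m) * D)) by ring.
    by apply: ler_wpM2l => //; lra.
  have -> : c * D = (2 * (1 + M) * (1 + m) * D) / M by rewrite /c; field; rewrite lt0r_neq0.
  by rewrite ler_pdivlMr // mulrC.
rewrite -/(Qc M) in hq; rewrite en in hP *.
set Y := a + b - d in hP *.
set H := a * b - M ^+ 2 - u * v in H0 hP hq.
have Y0 : 0 <= Y by rewrite /Y; lra.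
have H0' : 0 <= H by rewrite /H; lra.
set P := dl + 2 * (u * v + p) + 2 * H in hP.
have PB : P <= F * Y * B.
  apply: le_trans hP _.
  have -> : F * Y * B = Y * (2 * (2 * ((1 + M) * B))) by rewrite /F; ring.
  apply: ler_wpM2l => //; lra.
have dl0 : 0 < dl.
  rewrite /dl; have -> : 4 * M ^+ 2 - m ^+ 2 = (2 * M - m) * (2 * M + m) by ring.
  by rewrite mulr_gt0 //; lra.
have Pd : dl <= P by rewrite /P; lra.
have PH : 2 * H <= P by rewrite /P; lra.
have F0 : 0 < F by rewrite /F; lra.
have c0 : 0 < c by rewrite /c divr_gt0 // !mulr_gt0 //; lra.
have Q0 := Qc_gt0 M0.
have s2' : 2 * u + 1 <= v -> B <= 2 * D /\ 1 + v <= Qc M * (1 + u) * H.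
  by move=> v3; split; [exact: s2 | exact: hq].
have KE : Kdm m M = F * ((3 + 20 / dl) * c + 2 * (2 + 4 * Qc M)) +
   F * ((4 * c + 7) / dl + Qc M) by [].
have [T4A [T4B T4D]] := dm_2b_t4 hu uv A1 B1 D1 Y0 H0' dl0 F0 c0 Q0 PB Pd PH Bv uA2
   (fun _ => s1) s2'.
have j0 : 0 < 20 / dl by rewrite divr_gt0.
have j1 : 0 < (3 + 20 / dl) * c by rewrite mulr_gt0 //; lra.
have k1 : 0 <= F * ((3 + 20 / dl) * c + 2 * (2 + 4 * Qc M)).
  by rewrite mulr_ge0 //; lra.
have j2 : 0 <= (4 * c + 7) / dl by rewrite divr_ge0 //; lra.
have k2 : 0 <= F * ((4 * c + 7) / dl + Qc M).
  by rewrite mulr_ge0 //; lra.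
have mono : forall k X, 0 <= X -> 1 <= k * Y * X -> 0 <= k -> k <= Kdm m M ->
    1 <= Kdm m M * Y * X.
  move=> k X X0 h k0 kK; apply: le_trans h _.
  apply: ler_wpM2r => //; apply: ler_wpM2r => //.
split; last split; last split.
- move=> w w0 w2 ew.
  have Pt : 2 * (u * v * w) <= P by rewrite /P ew; lra.
  have h := dm_2b_arith hu uv w0 w2 A1 B1 D1 Y0 H0' dl0 F0 c0 Q0 (erefl _) PB Pd Pt PH
     Bv uA2 Au eB (fun _ => s1) s2'.
  apply: le_trans h _.
  apply: ler_wpM2r; first lra; apply: ler_wpM2r => //.
  rewrite KE; lra.
- by apply: (mono _ A (le_trans ler01 A1) T4A k2); rewrite KE; lra.
- by apply: (mono _ B (le_trans ler01 B1) T4B k2); rewrite KE; lra.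
- by apply: (mono _ D (le_trans ler01 D1) T4D k2); rewrite KE; lra.
Qed.


Definition cfg_ok {R : realType} (K u v q A B D Y : R) (c1 c2 : Prop) : Prop :=
  (c1 -> D <= K * Y /\ A <= K * Y /\ B <= K * Y) /\
  (c2 -> forall w, 0 <= w -> w <= 2 -> u * v * w = u * v - q ->
      A * B * w <= K * Y * D) /\
  1 <= K * Y * A /\ 1 <= K * Y * B /\ 1 <= K * Y * D.

Lemma cfg_mono {R : realType} (K K' u v q A B D Y : R) (c1 c2 : Prop) :
  0 <= K -> K <= K' -> 0 <= Y -> 0 <= A -> 0 <= B -> 0 <= D ->
  cfg_ok K u v q A B D Y c1 c2 -> cfg_ok K' u v q A B D Y c1 c2.
Proof.
move=> K0 KK Y0 A0 B0 D0 [h1 [h2 [h3 [h4 h5]]]].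
have KY : K * Y <= K' * Y by apply: ler_wpM2r.
have KYX : forall X, 0 <= X -> K * Y * X <= K' * Y * X.
  by move=> X X0; apply: ler_wpM2r.
split; [|split; [|split; [|split]]].
- by move=> c; have [? [? ?]] := h1 c; split; [|split]; apply: le_trans KY.
- by move=> c w w0 w2 ew; apply: le_trans (h2 c w w0 w2 ew) (KYX _ D0).
- exact: le_trans h3 (KYX _ A0).
- exact: le_trans h4 (KYX _ B0).
- exact: le_trans h5 (KYX _ D0).
Qed.

Lemma pm_ok {R : realType} (m M : R) : 0 < m -> 0 < M ->
  exists K, 0 < K /\ forall u v p a b d A B D : R, geo m M u v p a b d A B D ->
  cfg_ok K u v (- p) A B D `|d + a + b| True False.
Proof.
move=> m0 M0.
have c1 : 0 < (1 + m) / m by rewrite divr_gt0 //; lra.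
have c2 : 0 < (1 + M) / M by rewrite divr_gt0 //; lra.
have c3 : 0 < 1 / M by rewrite divr_gt0 //; lra.
exists ((1 + m) / m + (1 + M) / M + 1 / M); split; first lra.
move=> u v p a b d A B D G.
have [[md D1 mD dD] _] := geo_d m0 G.
have G' := G.
geo_destr G'.
have [[Ma _ _ _ _] [_ _ MA _]] := @brk _ M u a A M0 hu ha hA ea eA.
have [[Mb _ _ _ _] [_ _ MB _]] := @brk _ M v b B M0 hv hb hB eb eB.
have [A1 _ _ _] := brk1 hu hA eA.
have [B1 _ _ _] := brk1 hv hB eB.
clear ea eb ed eA eB eD hp1 hp2.
rewrite ger0_norm; last lra.
set Y := d + a + b.
set K := (1 + m) / m + (1 + M) / M + 1 / M.
have Y0 : 0 <= Y by rewrite /Y; lra.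
have YM : M <= Y by rewrite /Y; lra.
have h1 : 1 <= K * Y.
  apply: (@scale_le _ M 1) => //; rewrite /K; lra.
have hX : forall X, 1 <= X -> 1 <= K * Y * X.
  move=> X X1; have h1c := h1; apply: le_trans h1 _; rewrite -{1}[K * Y]mulr1.
  by apply: ler_wpM2l; [exact: le_trans ler01 h1c | exact: X1].
split; [|split; [|split; [|split]]] => //.
- move=> _; split; [|split].
  + apply: (@scale_le _ m (1 + m)) => //; [rewrite /Y; nra | rewrite /K; lra].
  + apply: (@scale_le _ M (1 + M)) => //; [rewrite /Y; nra | rewrite /K; lra].
  + apply: (@scale_le _ M (1 + M)) => //; [rewrite /Y; nra | rewrite /K; lra].
- exact: hX.
- exact: hX.
- exact: hX.
Qed.


Lemma geo_pos {R : realType} (m M u v p a b d A B D : R) :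
  0 < m -> geo m M u v p a b d A B D -> 1 <= A /\ 1 <= B /\ 1 <= D.
Proof.
move=> m0 G.
have [[_ D1 _ _] _] := geo_d m0 G.
geo_destr G.
have [A1 _ _ _] := brk1 hu hA eA.
have [B1 _ _ _] := brk1 hv hB eB.
by [].
Qed.

Lemma same_ok {R : realType} (m M : R) : 0 < m -> 0 < M ->
  exists K, 0 < K /\ forall u v p a b d A B D mu : R, geo m M u v p a b d A B D ->
  (mu = d + a - b \/ mu = d - a + b) ->
  cfg_ok K u v p A B D `|mu| False True.
Proof.
move=> m0 M0.
exists (2 * (1 + m) * KS m M); split.
  by rewrite !mulr_gt0 ?KS_gt0 //; lra.
move=> u v p a b d A B D mu G hmu.
have [h1 [h2 [h3 h4]]] := same_all m0 M0 G hmu.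
split; first by [].
split; first by move=> _ w w0 w2 ew; apply: h1.
by split; [|split].
Qed.

Lemma dm_ok {R : realType} (m M : R) : 0 < m -> m < 2 * M ->
  exists K, 0 < K /\ forall u v p a b d A B D : R, geo m M u v p a b d A B D ->
  cfg_ok K u v (- p) A B D `|d - a - b|
     (d <= 1 / 2 * Num.min a b) (1 / 2 * Num.min a b < d).
Proof.
move=> m0 mM.
have [K1 [K10 h1b]] := dm_1b m0 mM.
have K20 := Kdm_gt0 m0 mM.
exists (K1 + Kdm m M); split; first lra.
move=> u v p a b d A B D G.
have [A1 [B1 D1]] := geo_pos m0 G.
have Y0 := normr_ge0 (d - a - b).
set Y := `|d - a - b| in Y0 *.
have mnA : Num.min a b <= a by rewrite ge_min lexx.
have mnB : Num.min a b <= b by rewrite ge_min lexx orbT.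
have K1Y : 0 <= K1 * Y by rewrite mulr_ge0 //; lra.
have KY : K1 * Y <= (K1 + Kdm m M) * Y by apply: ler_wpM2r => //; lra.
have KYX : forall k X, 0 <= X -> 0 <= k -> k <= K1 + Kdm m M -> k * Y * X <= (K1 + Kdm m M) * Y * X.
  by move=> k X X0 k0 kK; apply: ler_wpM2r => //; apply: ler_wpM2r.
have part2 : 1 / 2 * Num.min a b < d ->
    (forall w, 0 <= w -> w <= 2 -> u * v * w = u * v - - p ->
      A * B * w <= Kdm m M * Y * D) /\
    1 <= Kdm m M * Y * A /\ 1 <= Kdm m M * Y * B /\ 1 <= Kdm m M * Y * D.
  move=> hdd.
  have G' := G; geo_destr G'.
  have [uv|vu] := lerP u v.
  - have ab : a <= b by apply: sq_le => //; rewrite ea eb; nra.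
    have da : a / 2 < d by move: hdd; rewrite (min_l ab); lra.
    have [k1 k2] := dm_2b m0 mM G uv da.
    split => //.
    by move=> w w0 w2 ew; apply: k1 => //; rewrite ew opprK.
  - have ba : b <= a by apply: sq_le => //; rewrite ea eb; nra.
    have db : b / 2 < d by move: hdd; rewrite minC (min_l ba); lra.
    have eY : `|d - b - a| = Y by rewrite /Y; congr `|_|; ring.
    have [k1 [k2 [k3 k4]]] := dm_2b m0 mM (geo_swap G) (ltW vu) db.
    rewrite eY in k1 k2 k3 k4.
    split; last by split; [|split].
    move=> w w0 w2 ew; rewrite [A * B]mulrC; apply: k1 => //.
    by rewrite [v * u]mulrC ew opprK.
split; [|split; [|split; [|split]]].
- move=> hdd.
  have da : d <= a / 2 by lra.
  have db : d <= b / 2 by lra.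
  have [k1 [k2 [k3 _]]] := h1b u v p a b d A B D G da db.
  by split; [|split]; apply: le_trans KY.
- move=> hdd w w0 w2 ew.
  have [k _] := part2 hdd.
  apply: le_trans (k w w0 w2 ew) _; apply: KYX; lra.
all: have [hdd|hdd] := lerP d (1 / 2 * Num.min a b).
- have da : d <= a / 2 by lra.
  have db : d <= b / 2 by lra.
  have [_ [_ [_ k]]] := h1b u v p a b d A B D G da db.
  apply: le_trans (KYX K1 A _ _ _); [|lra|lra|lra].
  apply: le_trans k _; rewrite -{1}[K1 * Y]mulr1; apply: ler_wpM2l => //.
- have [_ [k _]] := part2 hdd.
  apply: le_trans k (KYX _ _ _ _ _); lra.
- have da : d <= a / 2 by lra.
  have db : d <= b / 2 by lra.
  have [_ [_ [_ k]]] := h1b u v p a b d A B D G da db.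
  apply: le_trans (KYX K1 B _ _ _); [|lra|lra|lra].
  apply: le_trans k _; rewrite -{1}[K1 * Y]mulr1; apply: ler_wpM2l => //.
- have [_ [_ [k _]]] := part2 hdd.
  apply: le_trans k (KYX _ _ _ _ _); lra.
- have da : d <= a / 2 by lra.
  have db : d <= b / 2 by lra.
  have [_ [_ [_ k]]] := h1b u v p a b d A B D G da db.
  apply: le_trans (KYX K1 D _ _ _); [|lra|lra|lra].
  apply: le_trans k _; rewrite -{1}[K1 * Y]mulr1; apply: ler_wpM2l => //.
- have [_ [_ [_ k]]] := part2 hdd.
  apply: le_trans k (KYX _ _ _ _ _); lra.
Qed.

Lemma finish {R : realType} (C k X Y : R) : 0 < C -> 0 <= Y -> k <= C ->
  X <= k * Y -> C^-1 * X <= Y.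
Proof.
move=> C0 Y0 kC h.
rewrite mulrC ler_pdivrMr //.
apply: le_trans h _; rewrite mulrC; exact: ler_wpM2l.
Qed.

Lemma inv_le {R : realType} (X Z : R) : 0 < X -> 1 <= Z * X -> X^-1 <= Z.
Proof.
move=> X0 h; rewrite -[X^-1]mul1r ler_pdivrMr //.
Qed.

Lemma assemble {R : realType} (K Kt u v q A B D Y th2 : R) (c1 c2 : Prop) :
  0 < K -> 0 < Kt -> 1 <= A -> 1 <= B -> 1 <= D -> D <= A + B -> 0 <= Y ->
  cfg_ok K u v q A B D Y c1 c2 ->
  (c1 -> (K * (1 + 2 * Kt))^-1 * Num.max D (Num.max A B) <= Y) /\
  (c2 -> forall w, 0 <= w -> w <= 2 -> u * v * w = u * v - q -> th2 <= Kt * w ->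
     (K * (1 + 2 * Kt))^-1 * (A * B / D) * th2 <= Y) /\
  (c1 \/ c2 -> forall w, 0 <= w -> w <= 2 -> u * v * w = u * v - q -> th2 <= Kt * w ->
     0 <= th2 ->
     (K * (1 + 2 * Kt))^-1 * Num.min A B * th2 <= Y) /\
  (K * (1 + 2 * Kt))^-1 * Num.max D^-1 (Num.max A^-1 B^-1) <= Y.
Proof.
move=> K0 Kt0 A1 B1 D1 DAB Y0 [h1 [h2 [h3 [h4 h5]]]].
set C := K * (1 + 2 * Kt).
have C0 : 0 < C by rewrite /C mulr_gt0 //; lra.
have KC : K <= C by rewrite /C ler_peMr //; lra.
have KKt : 0 < K * Kt by rewrite mulr_gt0.
have KtC : Kt * K <= C by rewrite /C mulrDr mulr1; lra.
have KtC2 : 2 * Kt * K <= C by rewrite /C mulrDr mulr1; lra.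
have D0 : 0 < D by lra.
have c2b : c2 -> forall w, 0 <= w -> w <= 2 -> u * v * w = u * v - q -> th2 <= Kt * w ->
    A * B / D * th2 <= (Kt * K) * Y.
  move=> c w w0 w2 ew hth.
  have e := h2 c w w0 w2 ew.
  have ABD : 0 <= A * B / D by rewrite divr_ge0 // ?mulr_ge0 //; lra.
  have e1 : A * B / D * th2 <= A * B / D * (Kt * w) by apply: ler_wpM2l.
  apply: le_trans e1 _.
  have -> : A * B / D * (Kt * w) = Kt * ((A * B * w) / D).
    by field; rewrite lt0r_neq0.
  rewrite -[Kt * K * Y]mulrA; apply: ler_wpM2l; first lra.
  by rewrite ler_pdivrMr.
split; [|split; [|split]].
- move=> c; have [k1 [k2 k3]] := h1 c.
  apply: (finish C0 Y0 KC).
  by rewrite !ge_max k1 k2 k3.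
- move=> c w w0 w2 ew hth; rewrite -mulrA; apply: (finish C0 Y0 KtC); exact: (c2b c w w0 w2 ew hth).
- move=> c w w0 w2 ew hth th0; rewrite -mulrA; apply: (finish C0 Y0 KtC2).
  case: c => c.
  + have [_ [k2 _]] := h1 c.
    have mA : Num.min A B <= A by rewrite ge_min lexx.
    have mA0 : 0 <= Num.min A B by rewrite le_min; apply/andP; split; lra.
    have : Num.min A B * th2 <= (K * Y) * (Kt * w) by apply: ler_pM => //; lra.
    move=> h; apply: le_trans h _.
    have -> : 2 * Kt * K * Y = (K * Y) * (Kt * 2) by ring.
    apply: ler_wpM2l; first by rewrite mulr_ge0 //; lra.
    by rewrite ler_wpM2l //; lra.
  + have mA : Num.min A B <= A by rewrite ge_min lexx.
    have mB : Num.min A B <= B by rewrite ge_min lexx orbT.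
    have mA0 : 0 <= Num.min A B by rewrite le_min; apply/andP; split; lra.
    have hm0 : Num.min A B * D <= 2 * (A * B).
      have [AB|BA] := lerP A B; nra.
    have hm : Num.min A B <= 2 * (A * B / D) by rewrite mulrA ler_pdivlMr.
    have := c2b c w w0 w2 ew hth; move=> h.
    have : Num.min A B * th2 <= 2 * (A * B / D) * th2 by apply: ler_wpM2r.
    move=> h'; apply: le_trans h' _.
    have -> : 2 * Kt * K * Y = 2 * (Kt * K * Y) by ring.
    rewrite -mulrA; apply: ler_wpM2l => //; lra.
- apply: (finish C0 Y0 KC).
  rewrite !ge_max; apply/andP; split; [|apply/andP; split]; apply: inv_le; try lra.
Qed.

Lemma norm3_sqr {R : realType} (x : 'rV[R]_3) : norm3 x ^+ 2 = dot3 x x.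
Proof. by rewrite /norm3 sqr_sqrtr // dot_ge0. Qed.

Lemma norm3_ge0 {R : realType} (x : 'rV[R]_3) : 0 <= norm3 x.
Proof. exact: sqrtr_ge0. Qed.

Lemma jb_sqr {R : realType} (c : R) (x : 'rV[R]_3) : jb c x ^+ 2 = c ^+ 2 + dot3 x x.
Proof. by rewrite /jb sqr_sqrtr // addr_ge0 ?sqr_ge0 ?dot_ge0. Qed.

Lemma geo_vec {R : realType} (m M : R) (x1 x2 : 'rV[R]_3) :
  geo m M (norm3 x1) (norm3 x2) (dot3 x1 x2) (jb M x1) (jb M x2) (jb m (x1 - x2))
    (jb1 x1) (jb1 x2) (jb1 (x1 - x2)).
Proof.
have u0 := norm3_ge0 x1; have v0 := norm3_ge0 x2.
have eu := norm3_sqr x1; have ev := norm3_sqr x2.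
have cs := @dot_CS _ x1 x2.
have uv0 : 0 <= norm3 x1 * norm3 x2 by rewrite mulr_ge0.
have cs' : dot3 x1 x2 ^+ 2 <= (norm3 x1 * norm3 x2) ^+ 2 by rewrite exprMn eu ev.
rewrite /geo /jb1 !jb_sqr dot_sub -eu -ev expr1n.
do !split => //; try exact: sqrtr_ge0.
- by apply: sq_le.
- by rewrite lerNl; apply: sq_le; rewrite ?sqrrN.
Qed.

Lemma angle_w {R : realType} (Kt : R)
  (hKt : forall t, -1 <= t <= 1 -> acos t ^+ 2 <= Kt * (1 - t))
  (s1 s2 : bool) (x1 x2 : 'rV[R]_3) : x1 != 0 -> x2 != 0 ->
  exists w, 0 <= w /\ w <= 2 /\
   norm3 x1 * norm3 x2 * w = norm3 x1 * norm3 x2 - sgnb s1 * sgnb s2 * dot3 x1 x2 /\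
   angle3 (sgnb s1 *: x1) (sgnb s2 *: x2) ^+ 2 <= Kt * w.
Proof.
move=> n1 n2.
have d1 := @dot_gt0 _ x1 n1; have d2 := @dot_gt0 _ x2 n2.
have u0 : 0 < norm3 x1 by rewrite /norm3 sqrtr_gt0.
have v0 : 0 < norm3 x2 by rewrite /norm3 sqrtr_gt0.
have uv0 : 0 < norm3 x1 * norm3 x2 by rewrite mulr_gt0.
have ss : forall s : bool, sgnb s * sgnb s = 1 :> R.
  by case; rewrite /sgnb ?mulr1 ?mulrNN ?mulr1.
have ns : forall (s : bool) (x : 'rV[R]_3), norm3 (sgnb s *: x) = norm3 x.
  by move=> s x; rewrite /norm3 dot_scale ss mul1r.
have sgv : (sgnb s1 * sgnb s2 : R) = 1 \/ (sgnb s1 * sgnb s2 : R) = -1.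
  by rewrite /sgnb; case: s1; case: s2 => /=; rewrite ?mulr1 ?mul1r ?mulrNN ?mulr1 ?mulN1r; auto.
set s := sgnb s1 * sgnb s2 in sgv *.
have s2e : s ^+ 2 = 1 by rewrite /s exprMn !expr2 !ss mulr1.
set t := s * dot3 x1 x2 / (norm3 x1 * norm3 x2).
have eang : angle3 (sgnb s1 *: x1) (sgnb s2 *: x2) = acos t.
  by rewrite /angle3 !ns dot_scale.
have G := geo_vec 1 1 x1 x2.
case: G => _ [_ [hp1 [hp2 _]]].
have hst : - (norm3 x1 * norm3 x2) <= s * dot3 x1 x2 <= norm3 x1 * norm3 x2.
  by case: sgv => ->; rewrite ?mul1r ?mulN1r; apply/andP; split; lra.
have tI : -1 <= t <= 1.
  case/andP: hst => h1 h2.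
  rewrite /t; apply/andP; split.
  - by rewrite ler_pdivlMr // mulN1r.
  - by rewrite ler_pdivrMr // mul1r.
exists (1 - t); split; [|split; [|split]].
- by case/andP: tI => _ h; lra.
- by case/andP: tI => h _; lra.
- rewrite /t mulrBr mulr1; congr (_ - _).
  by rewrite mulrC divfK // lt0r_neq0.
- by rewrite eang; apply: hKt.
Qed.

Lemma conclude {R : realType} (m M K Kt : R)
  (hKt : forall t, -1 <= t <= 1 -> acos t ^+ 2 <= Kt * (1 - t))
  (s1 s2 : bool) (x1 x2 : 'rV[R]_3) (c1 c2 : Prop) :
  0 < m -> 0 < K -> 0 < Kt ->
  cfg_ok K (norm3 x1) (norm3 x2) (sgnb s1 * sgnb s2 * dot3 x1 x2)
    (jb1 x1) (jb1 x2) (jb1 (x1 - x2)) `|mu m M s1 s2 x1 x2| c1 c2 ->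
  (c1 \/ c2) ->
  (c1 -> (K * (1 + 2 * Kt))^-1 *
      Num.max (jb1 (x1 - x2)) (Num.max (jb1 x1) (jb1 x2)) <= `|mu m M s1 s2 x1 x2|) /\
  (c2 -> x1 != 0 -> x2 != 0 ->
     (K * (1 + 2 * Kt))^-1 * (jb1 x1 * jb1 x2 / jb1 (x1 - x2))
       * angle3 (sgnb s1 *: x1) (sgnb s2 *: x2) ^+ 2 <= `|mu m M s1 s2 x1 x2|) /\
  (x1 != 0 -> x2 != 0 ->
     (K * (1 + 2 * Kt))^-1 * Num.min (jb1 x1) (jb1 x2)
       * angle3 (sgnb s1 *: x1) (sgnb s2 *: x2) ^+ 2 <= `|mu m M s1 s2 x1 x2|) /\
  (K * (1 + 2 * Kt))^-1 * Num.max (jb1 (x1 - x2))^-1 (Num.max (jb1 x1)^-1 (jb1 x2)^-1)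
       <= `|mu m M s1 s2 x1 x2|.
Proof.
move=> m0 K0 Kt0 cfg c12.
have G := geo_vec m M x1 x2.
have [A1 [B1 D1]] := geo_pos m0 G.
have [_ DAB _] := (geo_d m0 G).2.
have Y0 := normr_ge0 (mu m M s1 s2 x1 x2).
have [k1 [k2 [k3 k4]]] := assemble
  (angle3 (sgnb s1 *: x1) (sgnb s2 *: x2) ^+ 2) K0 Kt0 A1 B1 D1 DAB Y0 cfg.
split; [exact: k1|split; [|split; [|exact: k4]]].
- move=> c n1 n2.
  have [w [w0 [w2 [ew hw]]]] := angle_w hKt s1 s2 n1 n2.
  exact: k2 c w w0 w2 ew hw.
- move=> n1 n2.
  have [w [w0 [w2 [ew hw]]]] := angle_w hKt s1 s2 n1 n2.
  exact: k3 c12 w w0 w2 ew hw (sqr_ge0 _).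
Qed.

Lemma cfg_ge {R : realType} (m K K' : R) (x1 x2 : 'rV[R]_3) q Y (c1 c2 : Prop) :
  0 < m -> 0 <= K -> K <= K' -> 0 <= Y ->
  cfg_ok K (norm3 x1) (norm3 x2) q (jb1 x1) (jb1 x2) (jb1 (x1 - x2)) Y c1 c2 ->
  cfg_ok K' (norm3 x1) (norm3 x2) q (jb1 x1) (jb1 x2) (jb1 (x1 - x2)) Y c1 c2.
Proof.
move=> m0 K0 KK Y0; apply: cfg_mono => //.
all: have [A1 [B1 D1]] := geo_pos m0 (geo_vec m 1 x1 x2); lra.
Qed.

Theorem lemma2p2 :
  forall (R : realType), exists c : R, 0 < c /\
  forall (m M : R), 0 < m -> m < 2 * M ->
  exists C : R, 0 < C /\
  forall (s1 s2 : bool) (x1 x2 : 'rV[R]_3),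
    (* Case 1 *)
    ((s1 && ~~ s2) \/
     (~~ s1 /\ s2 /\ jb m (x1 - x2) <= c * Num.min (jb M x1) (jb M x2)) ->
     C^-1 * Num.max (jb1 (x1 - x2)) (Num.max (jb1 x1) (jb1 x2))
       <= `|mu m M s1 s2 x1 x2|) /\
    (* Case 2 *)
    ((s1 = s2 \/
     (~~ s1 /\ s2 /\ c * Num.min (jb M x1) (jb M x2) < jb m (x1 - x2))) ->
     x1 != 0 -> x2 != 0 ->
     C^-1 * (jb1 x1 * jb1 x2 / jb1 (x1 - x2))
       * angle3 (sgnb s1 *: x1) (sgnb s2 *: x2) ^+ 2
       <= `|mu m M s1 s2 x1 x2|) /\
    (* all signs *)
    (x1 != 0 -> x2 != 0 ->
     C^-1 * Num.min (jb1 x1) (jb1 x2)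
       * angle3 (sgnb s1 *: x1) (sgnb s2 *: x2) ^+ 2
       <= `|mu m M s1 s2 x1 x2|) /\
    C^-1 * Num.max (jb1 (x1 - x2))^-1 (Num.max (jb1 x1)^-1 (jb1 x2)^-1)
       <= `|mu m M s1 s2 x1 x2|.
Proof.
move=> R.
exists (1 / 2); split; first by rewrite divr_gt0.
move=> m M m0 mM.
have M0 : 0 < M by lra.
have [Ks [Ks0 hS]] := same_ok m0 M0.
have [Kp [Kp0 hP]] := pm_ok m0 M0.
have [Kd [Kd0 hD]] := dm_ok m0 mM.
have [Kt [Kt0 hKt]] := angle_bound R.
set K := Ks + Kp + Kd.
have K0 : 0 < K by rewrite /K; lra.
exists (K * (1 + 2 * Kt)); split; first by rewrite mulr_gt0 //; lra.
move=> s1 s2 x1 x2.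
have G := geo_vec m M x1 x2.
case: s1; case: s2.
-
  have e1 : mu m M true true x1 x2 = jb m (x1 - x2) + jb M x1 - jb M x2.
    by rewrite /mu /sgnb /=; ring.
  have eq : sgnb true * sgnb true * dot3 x1 x2 = dot3 x1 x2 :> R by rewrite /sgnb /= !mul1r.
  have Y0 := normr_ge0 (mu m M true true x1 x2).
  have cfg := hS _ _ _ _ _ _ _ _ _ _ G (or_introl e1).
  rewrite -eq in cfg.
  have cfg' := cfg_ge m0 (ltW Ks0) (_ : Ks <= K) Y0 cfg.
  have [k1 [k2 [k3 k4]]] := conclude hKt m0 K0 Kt0 (cfg' ltac:(rewrite /K; lra)) (or_intror I).
  split; first by case=> [//|[]].
  by split; [move=> _; exact: k2 I| split].
-
  have e1 : mu m M true false x1 x2 = jb m (x1 - x2) + jb M x1 + jb M x2.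
    by rewrite /mu /sgnb /=; ring.
  have eq : sgnb true * sgnb false * dot3 x1 x2 = - dot3 x1 x2 :> R.
    by rewrite /sgnb /= mul1r mulN1r.
  have Y0 := normr_ge0 (mu m M true false x1 x2).
  have cfg := hP _ _ _ _ _ _ _ _ _ G.
  rewrite -e1 -eq in cfg.
  have cfg' := cfg_ge m0 (ltW Kp0) (_ : Kp <= K) Y0 cfg.
  have [k1 [k2 [k3 k4]]] := conclude hKt m0 K0 Kt0 (cfg' ltac:(rewrite /K; lra)) (or_introl I).
  split; first by move=> _; exact: k1 I.
  split; first by case=> [//|[]].
  by split.
-
  have e1 : mu m M false true x1 x2 = jb m (x1 - x2) - jb M x1 - jb M x2.
    by rewrite /mu /sgnb /=; ring.
  have eq : sgnb false * sgnb true * dot3 x1 x2 = - dot3 x1 x2 :> R.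
    by rewrite /sgnb /= mulr1 mulN1r.
  have Y0 := normr_ge0 (mu m M false true x1 x2).
  have cfg := hD _ _ _ _ _ _ _ _ _ G.
  rewrite -e1 -eq in cfg.
  have cfg' := cfg_ge m0 (ltW Kd0) (_ : Kd <= K) Y0 cfg.
  have c12 : jb m (x1 - x2) <= 1 / 2 * Num.min (jb M x1) (jb M x2) \/
             1 / 2 * Num.min (jb M x1) (jb M x2) < jb m (x1 - x2).
    by case: lerP; [left|right].
  have [k1 [k2 [k3 k4]]] := conclude hKt m0 K0 Kt0 (cfg' ltac:(rewrite /K; lra)) c12.
  split; first by case=> [//|[_ [_ h]]]; exact: k1.
  split; first by case=> [//|[_ [_ h]]]; exact: k2.
  by split.
-
  have e1 : mu m M false false x1 x2 = jb m (x1 - x2) - jb M x1 + jb M x2.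
    by rewrite /mu /sgnb /=; ring.
  have eq : sgnb false * sgnb false * dot3 x1 x2 = dot3 x1 x2 :> R.
    by rewrite /sgnb /= mulrNN !mul1r.
  have Y0 := normr_ge0 (mu m M false false x1 x2).
  have cfg := hS _ _ _ _ _ _ _ _ _ _ G (or_intror e1).
  rewrite -eq in cfg.
  have cfg' := cfg_ge m0 (ltW Ks0) (_ : Ks <= K) Y0 cfg.
  have [k1 [k2 [k3 k4]]] := conclude hKt m0 K0 Kt0 (cfg' ltac:(rewrite /K; lra)) (or_intror I).
  split; first by case=> [//|[_ []]].
  by split; [move=> _; exact: k2 I| split].
Qed.
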